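(* Let $R$ be a commutative ring and $S$ a multiplicative subset of $R$ consisting of non-zero-divisors. If $R$ is a $u$-$S$-Artinian ring, then $R$ is an Artinian ring.
   Context: An $R$-module $M$ is $u$-$S$-Artinian (with respect to $s$) if there exists $s\in S$ such that for every descending chain $M_1\supseteq M_2\supseteq\cdots$ of submodules of $M$ there is $k\ge1$ with $sM_k\subseteq M_n$ for all $n\ge k$. $R$ is a $u$-$S$-Artinian ring if it is $u$-$S$-Artinian as an $R$-module. *)

(* Defs.v *)
From mathcomp Require Import all_boot all_algebra.
Set Implicit Arguments. Unset Strict Implicit. Unset Printing Implicit Defensive.
Import GRing.Theory.
Local Open Scope ring_scope.

(* Submodules of R viewed as an R-module = ideals of R (as Prop predicates). *)
Definition is_ideal (R : comPzRingType) (I : R -> Prop) : Prop :=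
  [/\ I 0, (forall x y, I x -> I y -> I (x + y)) & (forall r x, I x -> I (r * x))].

(* Descending chain I 0 ⊇ I 1 ⊇ ... of ideals (indexing from 0 instead of 1). *)
Definition descending_ideal_chain (R : comPzRingType) (I : nat -> R -> Prop) : Prop :=
  (forall n, is_ideal (I n)) /\ (forall n x, I n.+1 x -> I n x).

Definition multiplicative_subset (R : comPzRingType) (S : R -> Prop) : Prop :=
  S 1 /\ (forall s t, S s -> S t -> S (s * t)).

Definition non_zero_divisors_only (R : comPzRingType) (S : R -> Prop) : Prop :=
  forall s, S s -> forall r : R, s * r = 0 -> r = 0.

Definition u_S_Artinian_ring (R : comPzRingType) (S : R -> Prop) : Prop :=
  exists2 s, S s &
    forall I : nat -> R -> Prop, descending_ideal_chain I ->
      exists2 k : nat, (0 < k)%N &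
        forall n : nat, (k <= n)%N -> forall x, I k x -> I n (s * x).

Definition Artinian_ring (R : comPzRingType) : Prop :=
  forall I : nat -> R -> Prop, descending_ideal_chain I ->
    exists k : nat, forall n : nat, (k <= n)%N -> forall x, I n x <-> I k x.

(* Main.v *)
Require Import Defs.
From mathcomp Require Import all_boot all_algebra.
Import GRing.Theory.
Local Open Scope ring_scope.

Lemma desc_le (R : comPzRingType) (I : nat -> R -> Prop) :
  descending_ideal_chain I -> forall k d x, I (k + d)%N x -> I k x.
Proof.
move=> [_ HI] k d; elim: d => [|d IH] x; first by rewrite addn0.
by rewrite addnS => /HI /IH.
Qed.

Lemma powS_in (R : comPzRingType) (S : R -> Prop) s :
  multiplicative_subset S -> S s -> forall n, S (s ^+ n).
Proof.
move=> [S1 SM] Ss; elim=> [|n IH]; first by rewrite expr0.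
by rewrite exprS; apply: SM.
Qed.

Theorem proposition3p2 (R : comPzRingType) (S : R -> Prop) :
  multiplicative_subset S -> non_zero_divisors_only S ->
  u_S_Artinian_ring S -> Artinian_ring R.
Proof.
move=> HS Hnz [s Ss Hart].
pose J := fun (n : nat) (y : R) => exists r, y = s ^+ n * r.
have HJ : descending_ideal_chain J.
  split; rewrite /J.
  - move=> n; split.
    + by exists 0; rewrite mulr0.
    + by move=> x y [a ->] [b ->]; exists (a + b); rewrite mulrDr.
    + by move=> r x [a ->]; exists (r * a); rewrite mulrCA.
  - by rewrite /J => n x [a ->]; exists (s * a); rewrite exprSr -mulrA.
have [r Hr] : exists r, s * r = 1.
  have [k _ Hk] := Hart J HJ.
  have Jk : J k (s ^+ k) by exists 1; rewrite mulr1.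
  have [a Ha] := Hk (k.+2) (leq_trans (leqnSn k) (leqnSn k.+1)) _ Jk.
  exists a.
  have H0 : s ^+ k.+1 * (1 - s * a) = 0.
    by rewrite mulrBr mulr1 mulrA -exprSr -Ha exprS subrr.
  have := Hnz _ (@powS_in R S s HS Ss k.+1) _ H0.
  by move/eqP; rewrite subr_eq0 => /eqP <-.
move=> I HI.
have [k _ Hk] := Hart I HI.
exists k => n kn x; split.
- by move=> Inx; rewrite -(subnKC kn) in Inx; exact: desc_le Inx.
- move=> Ikx; have := Hk n kn x Ikx.
  have [Hid _] := HI; have [_ _ Hmul] := Hid n.
  move=> /(Hmul r); by rewrite mulrA (mulrC r) Hr mul1r.
Qed.
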